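(* Let $\mathbf p$ be a Nash-routing of a max game on a graph with $n\ge2$ nodes, with $C=C(\mathbf p)$ and $D=D(\mathbf p)$, and let $\mathbf p^*$ be an optimal routing. Let $Z$ be the set of all edges $e$ with $C_e(\mathbf p)\ge C-2\lg n$. If $C\ge D+2\lg n+2$, then there is a nonempty set of edges $X\subseteq Z$ such that $|f(X)|\le 2|X|$.
   Context: A routing game $(\mathbf N,G,\mathcal P)$: players $\{1,\dots,N\}$ ($N\ge1$), a simple graph $G=(V,E)$ with $n=|V|$ nodes (so fewer than $n^2$ edges), and for each player $i$ a nonempty finite set $\mathcal P_i$ of paths from $u_i$ to $v_i$. A routing is $\mathbf p=[p_1,\dots,p_N]$, $p_i\in\mathcal P_i$. $C_e(\mathbf p)$ = number of players whose path uses edge $e$; $C_i(\mathbf p)=\max_{e\in p_i}C_e(\mathbf p)$; $D_i(\mathbf p)=|p_i|$; $C(\mathbf p)=\max_eC_e(\mathbf p)$; $D(\mathbf p)=\max_i|p_i|$. Max game: $pc_i=\max(C_i,D_i)$, $SC=\max(C,D)$. A Nash-routing is one where no player can strictly lower $pc_i$ by unilaterally changing its path within $\mathcal P_i$; an optimal routing $\mathbf p^*=[p_1^*,\dots,p_N^*]$ minimizes $SC$. $\lg=\log_2$. $\Pi_e(\mathbf p)$ is the set of players $i$ with $e\in p_i$. $H$ is the set of edges $e$ with $C_e(\mathbf p)\ge D+2$. For $e\in H$ and $i\in\Pi_e(\mathbf p)$, $f(e,i)=\{e'\in p_i^*: C_{e'}(\mathbf p)\ge C_e(\mathbf p)-1\}$;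 $f(e)=\bigcup_{i\in\Pi_e(\mathbf p)}f(e,i)$; for $X\subseteq H$, $f(X)=\bigcup_{e\in X}f(e)$. *)

(* Defs.v *)
From mathcomp Require Import all_boot.
Set Implicit Arguments. Unset Strict Implicit. Unset Printing Implicit Defensive.

Section Routing.
Variables (V : finType) (adj : rel V) (N : nat).

Definition is_path_from (u v : V) (q : seq V) : bool :=
  match q with
  | [::] => false
  | x :: s => [&& x == u, path adj x s, last x s == v & uniq q]
  end.

Definition pedges (q : seq V) : seq {set V} :=
  [seq [set xy.1; xy.2] | xy <- zip q (behead q)].

Definition plen (q : seq V) : nat := (size q).-1.

Definition routing := 'I_N -> seq V.

Definition Ce (r : routing) (e : {set V}) : nat :=
  #|[set i : 'I_N | e \in pedges (r i)]|.

Definition Ci (r : routing) (i : 'I_N) : nat := \max_(e <- pedges (r i)) Ce r e.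
Definition Di (r : routing) (i : 'I_N) : nat := plen (r i).
Definition Cong (r : routing) : nat := \max_(e : {set V}) Ce r e.
Definition Dil (r : routing) : nat := \max_(i < N) plen (r i).

Definition pc (r : routing) (i : 'I_N) : nat := maxn (Ci r i) (Di r i).
Definition SC (r : routing) : nat := maxn (Cong r) (Dil r).

Definition valid (P : 'I_N -> seq (seq V)) (r : routing) : Prop :=
  forall i, r i \in P i.

Definition upd (r : routing) (i : 'I_N) (q : seq V) : routing :=
  fun j => if j == i then q else r j.

Definition is_Nash (P : 'I_N -> seq (seq V)) (r : routing) : Prop :=
  valid P r /\
  forall i q, q \in P i -> pc r i <= pc (upd r i q) i.

Definition is_optimal (P : 'I_N -> seq (seq V)) (r : routing) : Prop :=
  valid P r /\ forall r', valid P r' -> SC r <= SC r'.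

Definition f_ei (p ps : routing) (e : {set V}) (i : 'I_N) : {set {set V}} :=
  [set e' | (e' \in pedges (ps i)) && (Ce p e - 1 <= Ce p e')].

Definition f_e (p ps : routing) (e : {set V}) : {set {set V}} :=
  \bigcup_(i | e \in pedges (p i)) f_ei p ps e i.

Definition f_X (p ps : routing) (X : {set {set V}}) : {set {set V}} :=
  \bigcup_(e in X) f_e p ps e.

End Routing.

(* Main.v *)
Require Import Defs.
From mathcomp Require Import all_boot.
From Stdlib Require Import Lia Classical.

Lemma arith1 (C a b j : nat) : C - a <= j -> a - 1 <= b -> C - b <= j.+1.
Proof. move=> /leP H1 /leP H2; apply/leP; rewrite -!minusE in H1 H2 *; lia. Qed.

Lemma fX_card (V : finType) (N : nat) (p ps : routing V N) X :
  #|f_X p ps X| <= #|V| ^ 2.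
Proof.
apply: leq_trans (_ : #|[set [set xy.1; xy.2] | xy in [set: V * V]]| <= _).
  apply: subset_leq_card; apply/subsetP => e' /bigcupP [e _ /bigcupP [i _]].
  rewrite inE => /andP [/mapP [xy _ ->] _].
  by apply: imset_f; rewrite inE.
apply: leq_trans (leq_imset_card _ _) _.
by rewrite cardsT card_prod expnS expn1.
Qed.

Theorem mainTheorem4 (V : finType) (adj : rel V) (N : nat)
  (adj_sym : symmetric adj) (adj_irr : irreflexive adj)
  (n2 : 2 <= #|V|) (N1 : 1 <= N)
  (u v : 'I_N -> V) (P : 'I_N -> seq (seq V))
  (P_ne : forall i, P i != [::])
  (P_path : forall i q, q \in P i -> is_path_from adj (u i) (v i) q)
  (p ps : routing V N)
  (p_Nash : is_Nash P p) (ps_opt : is_optimal P ps)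
  (hC : Dil p + 2 <= Cong p /\ #|V| ^ 2 <= 2 ^ (Cong p - Dil p - 2)) :
  let Z := [set e : {set V} | 2 ^ (Cong p - Ce p e) <= #|V| ^ 2] in
  exists X : {set {set V}},
    [/\ X != set0, X \subset Z & #|f_X p ps X| <= 2 * #|X| ].
Proof.
move=> Z.
apply: NNPP => Hn.
have Hexp : forall X, X != set0 -> X \subset Z -> 2 * #|X| < #|f_X p ps X|.
  move=> X H1 H2; rewrite ltnNge; apply/negP => H3; apply: Hn; by exists X.
pose Zj j := [set e : {set V} | Cong p - Ce p e <= j].
have Z0 : Zj 0 != set0.
  have hc : 0 < #|{set V}| by apply/card_gt0P; exists set0.
  have [e0 He0] := @eq_bigmax _ (Ce p) hc.
  apply/set0Pn; exists e0; rewrite inE /Cong He0 subnn //.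
have Zne : forall j, Zj j != set0.
  move=> j; case/set0Pn: Z0 => e; rewrite inE => He.
  apply/set0Pn; exists e; rewrite inE; exact: leq_trans He _.
have ZZ : forall j, 2 ^ j <= #|V| ^ 2 -> Zj j \subset Z.
  move=> j Hj; apply/subsetP => e; rewrite !inE => He.
  apply: leq_trans Hj; by rewrite leq_exp2l.
have Zf : forall j, f_X p ps (Zj j) \subset Zj j.+1.
  move=> j; apply/subsetP => e' /bigcupP [e]; rewrite inE => He /bigcupP [i _].
  rewrite !inE => /andP [_ H]; exact: arith1 He H.
have claim : forall j, 2 ^ j <= #|V| ^ 2 -> 2 ^ j.+1 <= #|f_X p ps (Zj j)|.
  elim=> [|j IH] Hj.
    have := Hexp _ (Zne 0) (ZZ 0 Hj).
    move=> H; apply: leq_trans H; have : 0 < #|Zj 0| by rewrite card_gt0 Zne.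
    by case: #|Zj 0|.
  have Hj' : 2 ^ j <= #|V| ^ 2 by apply: leq_trans Hj; rewrite leq_exp2l.
  have H1 := IH Hj'.
  have H2 : #|f_X p ps (Zj j)| <= #|Zj j.+1| by apply: subset_leq_card.
  have H3 := Hexp _ (Zne j.+1) (ZZ _ Hj).
  rewrite expnS; apply: leq_trans H3; apply: leq_trans (leqnSn _); rewrite leq_mul2l /=.
  exact: leq_trans H1 H2.
have n0 : 0 < #|V| ^ 2 by rewrite expn_gt0 (leq_trans _ n2).
have := claim _ (trunc_logP (isT : 1 < 2) n0).
rewrite leqNgt; move/negP; apply; apply: leq_ltn_trans (fX_card _ _ p ps _) _.
exact: trunc_log_ltn.
Qed.
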